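(* Let $H_1,\dots,H_n$ be realizable hypergroups. Then the product hypergroup $H_1\times\cdots\times H_n$ is realizable.
   Context: A hypergroup is a nonempty set $H$ with $*:H\times H\to P^*(H)$ (nonempty subsets), extended to subsets by unions, which is associative, has a unique identity $e$ ($e*x=x*e=\{x\}$), unique inverses $h^{-1}$ with $e\in(h^{-1}*h)\cap(h*h^{-1})$, and is reversible ($c\in a*b\Rightarrow a\in c*b^{-1},\ b\in a^{-1}*c$). The product $H_1\times\cdots\times H_n$ has componentwise hyperoperation $(a_i)_i*(b_i)_i=\prod_i (a_i*b_i)$. For a nonempty set $X$: $1_X$ is the diagonal, $p^*=\{(a,b):(b,a)\in p\}$, $xp=\{y:(x,y)\in p\}$. An association scheme on $X$ is a partition $S$ of $X\times X$ with $1_X\in S$, closed under $p\mapsto p^*$, such that for all $p,q,r\in S$ there is a cardinal $a_{pq}^r$ with $|yp\cap zq^*|=a_{pq}^r$ for all $y\in X$, $z\in yr$. $\mathbf{H}(S)$ is the hypergroup on $S$ with $p*q=\{r: a_{pq}^r\ge1\}$, identity $1_X$, inverse $p^*$. A hypergroup is realizable if it is isomorphic to $\mathbf{H}(S)$ for some association scheme $S$. *)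

(* Defs.v *)
From mathcomp Require Import all_boot.
Set Implicit Arguments. Unset Strict Implicit. Unset Printing Implicit Defensive.

(** A hyperoperation on [T] is encoded as a ternary relation:
    [mul a b c] means [c \in a * b]. *)

Section Hypergroup.
Variable T : Type.
Variable mul : T -> T -> T -> Prop.

(* (a*b)*c = a*(b*c), the product of a subset with an element being the union *)
Definition hg_assoc_ax : Prop :=
  forall a b c x, (exists d, mul a b d /\ mul d c x) <-> (exists d, mul b c d /\ mul a d x).

Definition hg_is_identity (e : T) : Prop :=
  forall x y, (mul e x y <-> y = x) /\ (mul x e y <-> y = x).

Definition hg_is_inverse (e h h' : T) : Prop := mul h' h e /\ mul h h' e.

Record is_hypergroup : Prop := {
  hg_inhabited : inhabited T;
  hg_nonempty : forall a b, exists c, mul a b c;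
  hg_assoc : hg_assoc_ax;
  hg_identity : exists! e, hg_is_identity e;
  hg_inverse : forall e, hg_is_identity e -> forall h, exists! h', hg_is_inverse e h h';
  hg_reversible : forall e, hg_is_identity e -> forall a b c a' b',
      hg_is_inverse e a a' -> hg_is_inverse e b b' -> mul a b c ->
      mul c b' a /\ mul a' c b
}.
End Hypergroup.

Definition hg_iso (T1 T2 : Type) (mul1 : T1 -> T1 -> T1 -> Prop)
    (mul2 : T2 -> T2 -> T2 -> Prop) : Prop :=
  exists f : T1 -> T2, bijective f /\
    forall a b c, mul1 a b c <-> mul2 (f a) (f b) (f c).

Definition prod_mul (n : nat) (H : 'I_n -> Type)
    (mul : forall i, H i -> H i -> H i -> Prop) :
    (forall i, H i) -> (forall i, H i) -> (forall i, H i) -> Prop :=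
  fun a b c => forall i, mul i (a i) (b i) (c i).

Definition equinumerous (A B : Type) : Prop := exists f : A -> B, bijective f.

(** A partition [S] of [X * X] is encoded by a surjective
    map [cls : X -> X -> I] assigning to each pair its class; the classes
    (elements of [S]) are indexed by [I], the class [p] being the relation
    [{(x,y) | cls x y = p}]. *)
Section Scheme.
Variables (X I : Type) (cls : X -> X -> I).

(* the set  y p  ∩  z q^*  = { w | (y,w) ∈ p and (w,z) ∈ q } *)
Definition isect (p q : I) (y z : X) : Type := {w : X | cls y w = p /\ cls w z = q}.

Record is_assoc_scheme : Prop := {
  as_inhabited : inhabited X;
  as_surj : forall p, exists x y, cls x y = p;
  as_diag : exists p0, forall x y, cls x y = p0 <-> x = y;
  as_transp : forall p, exists q, forall x y, cls x y = q <-> cls y x = p;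
  as_intersection : forall p q r, exists A : Type,      (* the cardinal a_pq^r *)
      forall y z, cls y z = r -> equinumerous A (isect p q y z)
}.

(** The hyperoperation of H(S): r ∈ p*q iff a_pq^r >= 1. *)
Definition HS_mul (p q r : I) : Prop :=
  exists y z, cls y z = r /\ inhabited (isect p q y z).
End Scheme.

Definition realizable (T : Type) (mul : T -> T -> T -> Prop) : Prop :=
  is_hypergroup mul /\
  exists (X I : Type) (cls : X -> X -> I),
    is_assoc_scheme cls /\ hg_iso mul (HS_mul cls).

(* Main.v *)
Require Import Defs.
From mathcomp Require Import all_boot.
From Stdlib Require Import ClassicalEpsilon FunctionalExtensionality ProofIrrelevance.

Lemma choice_dep {J : Type} (A : J -> Type) (P : forall j, A j -> Prop) :
  (forall j, exists x, P j x) -> exists f : forall j, A j, forall j, P j (f j).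
Proof.
intro h.
exists (fun j => proj1_sig (constructive_indefinite_description _ (h j))).
intro j. exact (proj2_sig (constructive_indefinite_description _ (h j))).
Qed.

Lemma sig_eq' (A : Type) (P : A -> Prop) (u v : sig P) :
  proj1_sig u = proj1_sig v -> u = v.
Proof.
destruct u as [u pu], v as [v pv]; simpl; intros ->.
f_equal; apply proof_irrelevance.
Qed.

Lemma prod_hg (n : nat) (H : 'I_n -> Type)
    (mul : forall i, H i -> H i -> H i -> Prop) :
  (forall i, is_hypergroup (mul i)) -> is_hypergroup (prod_mul mul).
Proof.
intro hh.
have [e He] : exists e : forall i, H i, forall i, hg_is_identity (mul i) (e i).
  apply (choice_dep (fun i => H i) (fun i x => hg_is_identity (mul i) x)) => i. destruct (hg_identity (hh i)) as [e [He _]]. by exists e.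
have Hid : hg_is_identity (prod_mul mul) e.
  intros x y; split; split.
  - intro Hm; apply functional_extensionality_dep => i.
    exact (proj1 (proj1 (He i (x i) (y i))) (Hm i)).
  - intros ->. intro i. exact (proj2 (proj1 (He i (x i) (x i))) erefl).
  - intro Hm; apply functional_extensionality_dep => i.
    exact (proj1 (proj2 (He i (x i) (y i))) (Hm i)).
  - intros ->. intro i. exact (proj2 (proj2 (He i (x i) (x i))) erefl).
have Huniq : forall E, hg_is_identity (prod_mul mul) E -> E = e.
  intros E HE. have Hm := proj2 (proj1 (HE e e)) erefl.
  apply functional_extensionality_dep => i.
  symmetry. exact (proj1 (proj2 (He i (E i) (e i))) (Hm i)).
split.
- destruct (choice_dep (fun i => H i) (fun _ _ => True)) as [x _].
    intro i. destruct (hg_inhabited (hh i)) as [x]. by exists x.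
  exact (inhabits x).
- intros a b. destruct (choice_dep (fun i => H i) (fun i c => mul i (a i) (b i) c)) as [c Hc].
    intro i. exact (hg_nonempty (hh i) (a i) (b i)).
  by exists c.
- intros a b c x; split.
  + intros [d [H1 H2]].
    destruct (choice_dep (fun i => H i) (fun i d' => mul i (b i) (c i) d' /\ mul i (a i) d' (x i))) as [d' Hd'].
      intro i. apply (proj1 (hg_assoc (hh i) (a i) (b i) (c i) (x i))). by exists (d i).
    exists d'; split => i; apply Hd'.
  + intros [d [H1 H2]].
    destruct (choice_dep (fun i => H i) (fun i d' => mul i (a i) (b i) d' /\ mul i d' (c i) (x i))) as [d' Hd'].
      intro i. apply (proj2 (hg_assoc (hh i) (a i) (b i) (c i) (x i))). by exists (d i).
    exists d'; split => i; apply Hd'.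
- exists e; split; first exact Hid. intros E HE. by rewrite (Huniq E HE).
- intros e' He' h. rewrite (Huniq e' He').
  destruct (choice_dep (fun i => H i) (fun i h' => hg_is_inverse (mul i) (e i) (h i) h')) as [h' Hh'].
    intro i. destruct (hg_inverse (hh i) (He i) (h i)) as [h' [Hh' _]]. by exists h'.
  exists h'; split.
  + split => i; apply Hh'.
  + intros h'' [Ha Hb]. apply functional_extensionality_dep => i.
    destruct (hg_inverse (hh i) (He i) (h i)) as [k [_ Hk]].
    rewrite -(Hk (h' i) (Hh' i)). apply Hk. by split.
- intros e' He' a b c a' b' [Ha1 Ha2] [Hb1 Hb2] Habc. rewrite (Huniq e' He') in Ha1 Ha2 Hb1 Hb2.
  split => i.
  + apply (proj1 (hg_reversible (hh i) (He i) (conj (Ha1 i) (Ha2 i)) (conj (Hb1 i) (Hb2 i)) (Habc i))).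
  + apply (proj2 (hg_reversible (hh i) (He i) (conj (Ha1 i) (Ha2 i)) (conj (Hb1 i) (Hb2 i)) (Habc i))).
Qed.

Definition pcls {J : Type} {X I : J -> Type} (cls : forall j, X j -> X j -> I j)
  (x y : forall j, X j) : forall j, I j := fun j => cls j (x j) (y j).

Lemma prod_scheme {J : Type} (X I : J -> Type) (cls : forall j, X j -> X j -> I j) :
  (forall j, is_assoc_scheme (cls j)) -> is_assoc_scheme (pcls cls).
Proof.
intro hs. split.
- destruct (choice_dep (fun j => X j) (fun _ _ => True)) as [x _].
    intro j. destruct (as_inhabited (hs j)) as [x]. by exists x.
  exact (inhabits x).
- intro p.
  destruct (choice_dep (fun j => (X j * X j)%type) (fun j xy => cls j xy.1 xy.2 = p j)) as [xy Hxy].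
    intro j. destruct (as_surj (hs j) (p j)) as [x [y Hxy]]. by exists (x, y).
  exists (fun j => (xy j).1), (fun j => (xy j).2).
  apply functional_extensionality_dep => j. exact (Hxy j).
- destruct (choice_dep (fun j => I j) (fun j p0 => forall x y, cls j x y = p0 <-> x = y)) as [p0 Hp0].
    intro j. exact (as_diag (hs j)).
  exists p0. intros x y; split.
  + intro E. apply functional_extensionality_dep => j.
    apply (proj1 (Hp0 j (x j) (y j))). exact (f_equal (fun F => F j) E).
  + intros <-. apply functional_extensionality_dep => j. exact (proj2 (Hp0 j (x j) (x j)) erefl).
- intro p.
  destruct (choice_dep (fun j => I j) (fun j q => forall x y, cls j x y = q <-> cls j y x = p j)) as [q Hq].
    intro j. exact (as_transp (hs j) (p j)).
  exists q. intros x y; split.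
  + intro E. apply functional_extensionality_dep => j.
    apply (proj1 (Hq j (x j) (y j))). exact (f_equal (fun F => F j) E).
  + intro E. apply functional_extensionality_dep => j.
    apply (proj2 (Hq j (x j) (y j))). exact (f_equal (fun F => F j) E).
- intros p q r.
  destruct (choice_dep (fun _ => Type) (fun j A => forall y z, cls j y z = r j -> equinumerous A (isect (cls j) (p j) (q j) y z))) as [A HA].
    intro j. exact (as_intersection (hs j) (p j) (q j) (r j)).
  exists (forall j, A j). intros y z Eyz.
  destruct (choice_dep (fun j => ((A j -> isect (cls j) (p j) (q j) (y j) (z j)) * (isect (cls j) (p j) (q j) (y j) (z j) -> A j))%type)
     (fun j gh => cancel gh.1 gh.2 /\ cancel gh.2 gh.1)) as [gh Hgh].
    intro j. destruct (HA j (y j) (z j) (f_equal (fun F => F j) Eyz)) as [g [h c1 c2]].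
    by exists (g, h).
  unshelve eexists.
    intro a. exists (fun j => proj1_sig ((gh j).1 (a j))). split.
    + apply functional_extensionality_dep => j. exact (proj1 (proj2_sig ((gh j).1 (a j)))).
    + apply functional_extensionality_dep => j. exact (proj2 (proj2_sig ((gh j).1 (a j)))).
  unshelve eexists.
    intros w j. apply (gh j).2. exists (proj1_sig w j). split.
    + exact (f_equal (fun F => F j) (proj1 (proj2_sig w))).
    + exact (f_equal (fun F => F j) (proj2 (proj2_sig w))).
  + intro a. apply functional_extensionality_dep => j. simpl.
    rewrite -[RHS](proj1 (Hgh j) (a j)). f_equal. by apply sig_eq'.
  + intro w. apply sig_eq'. simpl. apply functional_extensionality_dep => j.
    by rewrite (proj2 (Hgh j)).
Qed.

Lemma prod_HS {J : Type} (X I : J -> Type) (cls : forall j, X j -> X j -> I j) P Q R :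
  HS_mul (pcls cls) P Q R <-> forall j, HS_mul (cls j) (P j) (Q j) (R j).
Proof.
split.
- intros [y [z [E [[w [E1 E2]]]]]] j.
  exists (y j), (z j). split; first exact (f_equal (fun F => F j) E).
  constructor. exists (w j). split.
  + exact (f_equal (fun F => F j) E1).
  + exact (f_equal (fun F => F j) E2).
- intro h.
  destruct (choice_dep (fun j => (X j * X j * X j)%type)
    (fun j t => cls j t.1.1 t.1.2 = R j /\ cls j t.1.1 t.2 = P j /\ cls j t.2 t.1.2 = Q j)) as [t Ht].
    intro j. destruct (h j) as [y [z [E [[w [E1 E2]]]]]]. by exists (y, z, w).
  exists (fun j => (t j).1.1), (fun j => (t j).1.2). split.
    apply functional_extensionality_dep => j. apply Ht.
  constructor. exists (fun j => (t j).2). split; apply functional_extensionality_dep => j; apply Ht.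
Qed.

Theorem proposition4p4 (n : nat) (H : 'I_n -> Type)
    (mul : forall i, H i -> H i -> H i -> Prop) :
  (forall i, is_hypergroup (mul i)) ->
  (forall i, realizable (mul i)) ->
  realizable (prod_mul mul).
Proof.
intros hh hr. split; first exact (@prod_hg _ _ _ hh).
destruct (choice_dep (fun _ => {X : Type & {I : Type & X -> X -> I}})
  (fun i d => is_assoc_scheme (projT2 (projT2 d)) /\ hg_iso (mul i) (HS_mul (projT2 (projT2 d)))))
  as [d Hd].
  intro i. destruct (hr i) as [_ [X [I [cls Hc]]]]. by exists (existT _ X (existT _ I cls)).
set X := fun i => projT1 (d i).
set I := fun i => projT1 (projT2 (d i)).
set cls : forall i, X i -> X i -> I i := fun i => projT2 (projT2 (d i)).
exists (forall i, X i), (forall i, I i), (pcls cls). split.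
  apply prod_scheme => i. exact (proj1 (Hd i)).
destruct (choice_dep (fun i => ((H i -> I i) * (I i -> H i))%type)
  (fun i fg => cancel fg.1 fg.2 /\ cancel fg.2 fg.1 /\
     forall a b c, mul i a b c <-> HS_mul (cls i) (fg.1 a) (fg.1 b) (fg.1 c))) as [fg Hfg].
  intro i. destruct (proj2 (Hd i)) as [f [[g c1 c2] Hf]]. by exists (f, g).
exists (fun a i => (fg i).1 (a i)). split.
  exists (fun b i => (fg i).2 (b i)).
  + intro a. apply functional_extensionality_dep => i. apply (proj1 (Hfg i)).
  + intro b. apply functional_extensionality_dep => i. apply (proj1 (proj2 (Hfg i))).
intros a b c. rewrite prod_HS. split.
- intros h i. apply (proj2 (proj2 (Hfg i))). exact (h i).
- intros h i. apply (proj2 (proj2 (Hfg i))). exact (h i).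
Qed.
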